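(* Let $K^-$ be the graph obtained from the complete graph $K_4$ on vertices $v_1,v_2,v_3,v_4$ by deleting the edge $v_1v_2$. Let $c$ be any $(4,1)$-coloring of $K^-$, and let $D_c(K^-)$ be the associated digraph. All differences of colors below are taken in $\mathbb{Z}_4$. (a) If $c(v_1)=c(v_2)$, then $D_c(K^-)$ is acyclic and has no directed path between $v_1$ and $v_2$ (in either direction). (b) If $c(v_1)-c(v_2)=1$, then $D_c(K^-)$ is acyclic and has a directed path from $v_1$ to $v_2$. (c) If $c(v_1)-c(v_2)=2$, then $D_c(K^-)$ contains a directed cycle.
   Context: For positive integers $p,q$, a $(p,q)$-coloring of a graph $G$ is a map $c:V(G)\to\{0,1,\dots,p-1\}$ such that for every edge $xy\in E(G)$ one has $q\le |c(x)-c(y)|\le p-q$. A $(4,1)$-coloring is thus an ordinary proper coloring with colors $\{0,1,2,3\}$. For a $(p,q)$-coloring $c$ of $G$, $D_c(G)$ is the digraph with vertex set $V(G)$ which, for each edge $xy$ of $G$, contains the arc $(x,y)$ whenever $c(y)-c(x)\equiv q \pmod p$. *)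

(* Defs.v *)
From mathcomp Require Import all_boot.
Set Implicit Arguments. Unset Strict Implicit. Unset Printing Implicit Defensive.

Definition absdiff (a b : nat) : nat := if a <= b then b - a else a - b.

Definition pq_coloring (T : finType) (E : rel T) (p q : nat) (c : T -> nat) : Prop :=
  (forall x, c x < p) /\
  (forall x y, E x y -> q <= absdiff (c x) (c y) <= p - q).

(* arcs of D_c(G): (x,y) whenever xy is an edge and c(y) - c(x) = q (mod p).
   Colors lie in [0,p), so c y + p - c x is the non-truncated difference + p. *)
Definition Dc_arc (T : finType) (E : rel T) (p q : nat) (c : T -> nat) : rel T :=
  fun x y => E x y && ((c y + p - c x) %% p == q %% p).

Definition has_dicycle (T : finType) (a : rel T) : Prop :=
  exists s : seq T, [/\ s != [::], uniq s & cycle a s].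

Definition acyclic (T : finType) (a : rel T) : Prop := ~ has_dicycle a.

Definition dipath (T : finType) (a : rel T) (u v : T) : Prop :=
  exists s : seq T, path a u s /\ last u s = v.

(* K^- : K_4 on vertices v1,v2,v3,v4 (= 0,1,2,3) minus the edge v1 v2 *)
Definition Kminus : rel 'I_4 :=
  fun x y => (x != y) && ~~ ((val x == 0) && (val y == 1) || (val x == 1) && (val y == 0)).

Definition v1 : 'I_4 := @Ordinal 4 0 isT.
Definition v2 : 'I_4 := @Ordinal 4 1 isT.

Definition zdiff4 (a b : nat) : nat := (a + 4 - b) %% 4.

(* Main.v *)
Require Import Defs.
From mathcomp Require Import all_boot.
From Stdlib Require Import FunctionalExtensionality.

Definition o0 : 'I_4 := @Ordinal 4 0 isT.
Definition o1 : 'I_4 := @Ordinal 4 1 isT.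
Definition o2 : 'I_4 := @Ordinal 4 2 isT.
Definition o3 : 'I_4 := @Ordinal 4 3 isT.
Definition ords : seq 'I_4 := [:: o0; o1; o2; o3].

Lemma ordsP x : x \in ords.
Proof.
case: x => [m H]; rewrite /ords !inE.
case: m H => [|[|[|[|m]]]] H //.
Qed.

Fixpoint allseqs (n : nat) : seq (seq 'I_4) :=
  if n is n'.+1 then [::] :: [seq x :: s | x <- ords, s <- allseqs n']
  else [:: [::]].

Lemma allseqsP n (s : seq 'I_4) : size s <= n -> s \in allseqs n.
Proof.
elim: n s => [|n IH] [|x s] // Hs.
change (x :: s \in [::] :: [seq y :: t | y <- ords, t <- allseqs n]).
rewrite in_cons; apply/orP; right.
apply/allpairsP; exists (x, s); split => //; [exact: ordsP | exact: IH].
Qed.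

Definition hascyc (a : rel 'I_4) : bool :=
  has (fun s => (s != [::]) && uniq s && cycle a s) (allseqs 4).

Lemma hascycP a : reflect (has_dicycle a) (hascyc a).
Proof.
apply: (iffP hasP).
  by move=> [s _ /andP[/andP[H1 H2] H3]]; exists s.
move=> [s [H1 H2 H3]]; exists s; last by rewrite H1 H2 H3.
apply: allseqsP.
by have := card_uniqP H2; move=> <-; have := max_card (mem s); rewrite card_ord.
Qed.

Definition step (a : rel 'I_4) (S : seq 'I_4) :=
  S ++ [seq w <- ords | has (fun x => a x w) S].
Definition reachS a u := iter 4 (step a) [:: u].
Definition closedS (a : rel 'I_4) S :=
  all (fun x => all (fun w => a x w ==> (w \in S)) ords) S.
Definition noreach a u v := closedS a (reachS a u) && (v \notin reachS a u).
Definition yesreach (a : rel 'I_4) u v :=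
  has (fun s => path a u s && (last u s == v)) (allseqs 4).

Lemma closed_path a S u s : closedS a S -> u \in S -> path a u s -> last u s \in S.
Proof.
move=> HS; elim: s u => [|x s IH] u //= Hu /andP[Hux Hp].
apply: IH Hp; move/allP: HS => /(_ u Hu) /allP /(_ x (ordsP x)).
by rewrite Hux.
Qed.

Lemma noreachP a u v : noreach a u v -> ~ dipath a u v.
Proof.
move=> /andP[Hc Hv] [s [Hp Hl]].
have Hu : u \in reachS a u.
  have gen : forall n S, u \in S -> u \in iter n (step a) S.
    by move=> n S HS; elim: n => [|n IH] //=; rewrite /step mem_cat IH.
  by apply: gen; rewrite inE.
by have := @closed_path a _ _ _ Hc Hu Hp; rewrite Hl (negbTE Hv).
Qed.

Lemma yesreachP a u v : yesreach a u v -> dipath a u v.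
Proof. by move=> /hasP[s _ /andP[H1 /eqP H2]]; exists s. Qed.

Definition chk (c : 'I_4 -> nat) : bool :=
  let D := Dc_arc Kminus 4 1 c in
  all (fun x => all (fun y => Kminus x y ==> (1 <= absdiff (c x) (c y) <= 4 - 1)) ords) ords ==>
  [&& (c v1 == c v2) ==> [&& ~~ hascyc D, noreach D v1 v2 & noreach D v2 v1],
      (zdiff4 (c v1) (c v2) == 1) ==> (~~ hascyc D) && yesreach D v1 v2
    & (zdiff4 (c v1) (c v2) == 2) ==> hascyc D].

Definition nats4 := [:: 0; 1; 2; 3].

Lemma chk_all : all (fun a => all (fun b => all (fun d => all (fun e =>
  chk (fun i => nth 0 [:: a; b; d; e] i)) nats4) nats4) nats4) nats4.
Proof. vm_compute. reflexivity. Qed.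

Theorem lemma1 (c : 'I_4 -> nat) :
  pq_coloring Kminus 4 1 c ->
  let D := Dc_arc Kminus 4 1 c in
  [/\ (c v1 = c v2 ->
         acyclic D /\ ~ dipath D v1 v2 /\ ~ dipath D v2 v1),
      (zdiff4 (c v1) (c v2) = 1 ->
         acyclic D /\ dipath D v1 v2)
    & (zdiff4 (c v1) (c v2) = 2 -> has_dicycle D)].
Proof.
move=> [Hlt Hed] D.
have Hn : forall x, c x \in nats4.
  by move=> x; have := Hlt x; case: (c x) => [|[|[|[|m]]]].
have Hc : chk c.
  move/allP: chk_all => /(_ _ (Hn o0)) /allP /(_ _ (Hn o1)) /allP /(_ _ (Hn o2))
    /allP /(_ _ (Hn o3)).
  congr (is_true (chk _)); apply: functional_extensionality => -[[|[|[|[|i]]]] Hi] //=;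
    by congr c; apply: val_inj.
move: Hc; rewrite /chk.
have -> : all (fun x => all (fun y => Kminus x y ==> (1 <= absdiff (c x) (c y) <= 4 - 1)) ords) ords.
  by apply/allP => x _; apply/allP => y _; apply/implyP; apply: Hed.
rewrite /= -/D => /and3P[Ha Hb Hcc].
split.
- move=> /eqP E; move: Ha; rewrite E /= => /and3P[H1 H2 H3].
  split; first by move/hascycP; apply/negP.
  by split; apply: noreachP.
- move=> /eqP E; move: Hb; rewrite E /= => /andP[H1 H2].
  split; first by move/hascycP; apply/negP.
  exact: yesreachP.
- move=> /eqP E; move: Hcc; rewrite E /= => H; exact/hascycP.
Qed.
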